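(* Let $G=(U,V,E)$ be a finite bipartite graph, $F\subseteq E$, and let $(E_r,E_b)$ be an $(A,C)$-free bipartition of the set $E_c$ of committed edges of $G$. Fix a non-edge $uv\in\hat{E}$ with $u\in U$, $v\in V$, and define $H_r=\{u'v'\in E_r : uv'\in E_b,\ u'v\in E_b\}$, $H_b=\{u'v'\in E_b : uv'\in E_r,\ u'v\in E_r\}$ (where $u'\in U$, $v'\in V$), $H=H_r\cup H_b$, and $E_r'=(E_r\setminus H_r)\cup H_b$, $E_b'=(E_b\setminus H_b)\cup H_r$. Then no edge in $H$ is an edge of any forbidden configuration $(A_1)$, $(A_2)$, $(B_1)$, $(B_2)$ or $(C)$ of the pair $(E_r',E_b')$.
   Context: $\hat{E}=\{xy: x\in U,\ y\in V,\ xy\notin E\}$. Two edges $u_1v_1,u_2v_2\in E$ ($u_i\in U$, $v_i\in V$) are in conflict in $G$ if $u_1v_2\notin E$ and $u_2v_1\notin E$. An edge is committed if it is in conflict with some other edge of $E$; $E_c$ is the set of committed edges. A bipartition of $E_c$ is a pair $(R,B)$ with $R\cap B=\emptyset$, $R\cup B=E_c$, $F\cap E_c\subseteq B$. For a pair $(R,B)$ of disjoint subsets of $E_c$, the forbidden configurations on vertices $u_1,u_2\in U$, $v_1,v_2\in V$ are: $(A_1)$: $u_1v_1,u_2v_2\in R$, $u_1v_2,u_2v_1\in\hat{E}$; $(A_2)$: $u_1v_1,u_2v_2\in B$, $u_1v_2,u_2v_1\in\hat{E}$; $(B_1)$: $u_1v_1,u_2v_2\in R$, $u_1v_2\in\hat{E}$,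 $u_2v_1\in B$; $(B_2)$: $u_1v_1,u_2v_2\in B$, $u_1v_2\in\hat{E}$, $u_2v_1\in R$; $(C)$: $u_1v_1,u_2v_2\in R$, $u_1v_2\in\hat{E}$, $u_2v_1\in F$. The edges of a configuration are its members of $E$ (i.e. $u_1v_1,u_2v_2$, and $u_2v_1$ when it lies in $E$). $(R,B)$ is $(A,C)$-free if it has no configuration $(A_1)$, $(A_2)$ or $(C)$. *)

(* Defs.v *)
From mathcomp Require Import all_boot.

Set Implicit Arguments. Unset Strict Implicit. Unset Printing Implicit Defensive.

Section Defs.
Variables (U V : finType).
Implicit Types (E F R B : {set U * V}).

Definition nonedge E (e : U * V) : bool := e \notin E.

Definition conflict E (e1 e2 : U * V) : bool :=
  [&& e1 \in E, e2 \in E, (e1.1, e2.2) \notin E & (e2.1, e1.2) \notin E].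

Definition committed E : {set U * V} :=
  [set e in E | [exists e', (e' != e) && conflict E e e']].

Definition bipartition E F R B : Prop :=
  [/\ [disjoint R & B], R :|: B = committed E & F :&: committed E \subset B].

Definition confA1 E R (u1 u2 : U) (v1 v2 : V) : Prop :=
  [/\ (u1, v1) \in R, (u2, v2) \in R, nonedge E (u1, v2) & nonedge E (u2, v1)].
Definition confA2 E B (u1 u2 : U) (v1 v2 : V) : Prop :=
  [/\ (u1, v1) \in B, (u2, v2) \in B, nonedge E (u1, v2) & nonedge E (u2, v1)].
Definition confB1 E R B (u1 u2 : U) (v1 v2 : V) : Prop :=
  [/\ (u1, v1) \in R, (u2, v2) \in R, nonedge E (u1, v2) & (u2, v1) \in B].
Definition confB2 E R B (u1 u2 : U) (v1 v2 : V) : Prop :=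
  [/\ (u1, v1) \in B, (u2, v2) \in B, nonedge E (u1, v2) & (u2, v1) \in R].
Definition confC E F R (u1 u2 : U) (v1 v2 : V) : Prop :=
  [/\ (u1, v1) \in R, (u2, v2) \in R, nonedge E (u1, v2) & (u2, v1) \in F].

Definition forbidden_config E F R B u1 u2 v1 v2 : Prop :=
  confA1 E R u1 u2 v1 v2 \/ confA2 E B u1 u2 v1 v2 \/ confB1 E R B u1 u2 v1 v2 \/
  confB2 E R B u1 u2 v1 v2 \/ confC E F R u1 u2 v1 v2.

Definition AC_free E F R B : Prop :=
  forall u1 u2 v1 v2,
    [/\ ~ confA1 E R u1 u2 v1 v2, ~ confA2 E B u1 u2 v1 v2 & ~ confC E F R u1 u2 v1 v2].

Definition config_edge E (u1 u2 : U) (v1 v2 : V) (e : U * V) : Prop :=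
  e = (u1, v1) \/ e = (u2, v2) \/ (e = (u2, v1) /\ (u2, v1) \in E).

Definition Hr R B (u : U) (v : V) : {set U * V} :=
  [set e in R | ((u, e.2) \in B) && ((e.1, v) \in B)].
Definition Hb R B (u : U) (v : V) : {set U * V} :=
  [set e in B | ((u, e.2) \in R) && ((e.1, v) \in R)].
Definition Hset R B u v : {set U * V} := Hr R B u v :|: Hb R B u v.
Definition Er' R B u v : {set U * V} := (R :\: Hr R B u v) :|: Hb R B u v.
Definition Eb' R B u v : {set U * V} := (B :\: Hb R B u v) :|: Hr R B u v.

End Defs.

(* Main.v *)
Require Import Defs.
From mathcomp Require Import all_boot.

Set Implicit Arguments. Unset Strict Implicit. Unset Printing Implicit Defensive.

Section Sym.
Variables (U V : finType) (E R B : {set U * V}) (u : U) (v : V).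
Hypotheses (RE : forall e, e \in R -> e \in E) (BE : forall e, e \in B -> e \in E)
  (disj : forall e, e \in R -> e \in B -> False)
  (com : forall a b c d, (a,b) \in E -> (c,d) \in E -> (a,d) \notin E -> (c,b) \notin E ->
          ((a,b) \in R) \/ ((a,b) \in B))
  (part : forall (a : U) (b : V), (a,b) \in R -> exists x y,
          [/\ (x,y) \in E, (a,y) \notin E & (x,b) \notin E])
  (A1f : forall a b c d, (a,b) \in R -> (c,d) \in R -> (a,d) \notin E -> (c,b) \in E)
  (A2f : forall a b c d, (a,b) \in B -> (c,d) \in B -> (a,d) \notin E -> (c,b) \in E)
  (uvE : (u,v) \notin E).

Lemma comR a b c d : (a,b) \in E -> (c,d) \in E -> (a,d) \notin E -> (c,b) \notin E ->
  (a,b) \notin B -> (a,b) \in R.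
Proof. move=> h1 h2 h3 h4 /negP h5; by case: (com h1 h2 h3 h4). Qed.
Lemma comB a b c d : (a,b) \in E -> (c,d) \in E -> (a,d) \notin E -> (c,b) \notin E ->
  (a,b) \notin R -> (a,b) \in B.
Proof. move=> h1 h2 h3 h4 /negP h5; by case: (com h1 h2 h3 h4). Qed.
Lemma nB e : e \in R -> e \notin B.
Proof. by move=> h; apply/negP => h'; apply: (disj h h'). Qed.
Lemma nR e : e \in B -> e \notin R.
Proof. by move=> h; apply/negP => h'; apply: (disj h' h). Qed.
Lemma contraE (e : U * V) : e \notin E -> e \in E -> False.
Proof. by move=> /negP. Qed.

Lemma R'_notHr e : e \in Er' R B u v -> e \notin Hr R B u v.
Proof.
rewrite /Er' in_setU in_setD => /orP[/andP[-> _]//|].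
rewrite !inE => /andP[hb _]; apply/negP => /andP[hr _]; exact: disj hr hb.
Qed.

Lemma caseA2 u1 u2 v1 v2 :
  (u1,v1) \in Hr R B u v -> (u2,v2) \in Eb' R B u v -> (u1,v2) \notin E -> (u2,v1) \notin E -> False.
Proof.
rewrite /Eb' in_setU in_setD !inE /= => /and3P[r11 bu1 b1v] /orP[/andP[nHb b22]| /and3P[r22 _ _]] h12 h21; last first.
  exact: contraE h21 (A1f r11 r22 h12).
have uv2E : (u,v2) \in E := A2f b22 bu1 h21.
have u2vE : (u2,v) \in E := A2f b1v b22 h12.
have ruv2 : (u,v2) \in R.
  apply: (comR (c:=u1) (d:=v)) => //; first exact: BE.
  apply/negP => b; exact: contraE uvE (A2f b1v b h12).
have ru2v : (u2,v) \in R.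
  apply: (comR (c:=u) (d:=v1)) => //; first exact: BE.
  apply/negP => b; exact: contraE h21 (A2f bu1 b uvE).
by move: nHb; rewrite b22 ruv2 ru2v.
Qed.

Lemma partB a b : (a,b) \in R -> exists x y,
  [/\ (x,y) \in B, (a,y) \notin E & (x,b) \notin E].
Proof.
move=> r; have [x [y [xyE hay hxb]]] := part r.
exists x, y; split => //.
apply: (comB (c:=a) (d:=b)) => //; first exact: RE.
apply/negP => r'; exact: contraE hxb (A1f r r' hay).
Qed.

Lemma caseB1 u1 u2 v1 v2 :
  (u2,v1) \in Hr R B u v -> (u1,v1) \in Er' R B u v -> (u2,v2) \in Er' R B u v ->
  (u1,v2) \notin E -> False.
Proof.
rewrite /Er' !in_setU !in_setD !inE /= => /and3P[r21 bu1 b2v].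
move=> /orP[/andP[nHr1 r11]|/and3P[_ r _]]; last by move: (nR bu1); rewrite r.
move=> /orP[/andP[nHr2 r22]|/and3P[_ _ r]]; last by move: (nR b2v); rewrite r.
move=> h12.
have nb1 : (u1,v) \notin B by apply/negP => b; move: nHr1; rewrite r11 bu1 b.
have nb2 : (u,v2) \notin B by apply/negP => b; move: nHr2; rewrite r22 b b2v.
have [x [y [bxy h2y hx1]]] := partB r21.
have uyE : (u,y) \in E := A2f bxy bu1 hx1.
have xvE : (x,v) \in E := A2f b2v bxy h2y.
have rxv : (x,v) \in R.
  apply: (comR (c:=u) (d:=v1)) => //; first exact: BE.
  apply/negP => b; exact: contraE uvE (A2f b bu1 hx1).
have u1vE : (u1,v) \in E := A1f rxv r11 hx1.
have ruy : (u,y) \in R.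
  apply: (comR (c:=u2) (d:=v)) => //; first exact: BE.
  apply/negP => b; exact: contraE h2y (A2f b b2v uvE).
have uv2E : (u,v2) \in E := A1f r22 ruy h2y.
have ru1v : (u1,v) \in R by apply: (comR (c:=u) (d:=v2)).
have ruv2 : (u,v2) \in R by apply: (comR (c:=u1) (d:=v)).
exact: contraE uvE (A1f ru1v ruv2 h12).
Qed.

Lemma caseB2a u1 u2 v1 v2 :
  (u1,v1) \in Hr R B u v -> (u2,v2) \in Eb' R B u v -> (u1,v2) \notin E ->
  (u2,v1) \in Er' R B u v -> False.
Proof.
rewrite /Er' /Eb' !in_setU !in_setD !inE /= => /and3P[r11 bu1 b1v].
move=> /orP[/andP[nHb22 b22]|/and3P[_ b _]]; last first.
  move=> h12 _; exact: contraE uvE (A2f b1v b h12).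
move=> h12 /orP[/andP[nHr21 r21]|/and3P[_ r _]]; last by move: (nR bu1); rewrite r.
have nb2v : (u2,v) \notin B by apply/negP => b; move: nHr21; rewrite r21 bu1 b.
have u2vE : (u2,v) \in E := A2f b1v b22 h12.
have [x [y [bxy h2y hx1]]] := partB r21.
have uyE : (u,y) \in E := A2f bxy bu1 hx1.
have ru2v : (u2,v) \in R by apply: (comR (c:=u) (d:=y)).
have buy : (u,y) \in B.
  apply: (comB (c:=u2) (d:=v)) => //.
  apply/negP => r; exact: contraE h2y (A1f r ru2v uvE).
have nuv2 : (u,v2) \notin R by apply/negP => r; move: nHb22; rewrite b22 r ru2v.
have uv2nE : (u,v2) \notin E.
  apply/negP => h.
  have b : (u,v2) \in B.
    apply: (comB (c:=u1) (d:=v)) => //; exact: BE.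
  exact: contraE uvE (A2f b1v b h12).
exact: contraE h2y (A2f buy b22 uv2nE).
Qed.

Lemma caseB2b u1 u2 v1 v2 :
  (u2,v2) \in Hr R B u v -> (u1,v1) \in Eb' R B u v -> (u1,v2) \notin E ->
  (u2,v1) \in Er' R B u v -> False.
Proof.
rewrite /Er' /Eb' !in_setU !in_setD !inE /= => /and3P[r22 bu2 b2v] H11 h12.
move=> /orP[/andP[nHr21 r21]|/and3P[_ _ r]]; last by move: (nR b2v); rewrite r.
have nbu1 : (u,v1) \notin B by apply/negP => b; move: nHr21; rewrite r21 b b2v.
move: H11 => /orP[/andP[nHb11 b11]|/and3P[_ b _]]; last by move: nbu1; rewrite b.
have uv1E : (u,v1) \in E := A2f b11 bu2 h12.
have [x [y [bxy h2y hx1]]] := partB r21.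
have xvE : (x,v) \in E := A2f b2v bxy h2y.
have ruv1 : (u,v1) \in R by apply: (comR (c:=x) (d:=v)).
have bxv : (x,v) \in B.
  apply: (comB (c:=u) (d:=v1)) => //.
  apply/negP => r; exact: contraE uvE (A1f r ruv1 hx1).
have nu1v : (u1,v) \notin R by apply/negP => r; move: nHb11; rewrite b11 ruv1 r.
have u1vnE : (u1,v) \notin E.
  apply/negP => h.
  have b : (u1,v) \in B.
    apply: (comB (c:=u) (d:=v2)) => //; exact: BE.
  exact: contraE uvE (A2f b bu2 h12).
exact: contraE hx1 (A2f b11 bxv u1vnE).
Qed.

Lemma symA1 u1 u2 v1 v2 e : confA1 E (Er' R B u v) u1 u2 v1 v2 ->
  config_edge E u1 u2 v1 v2 e -> e \notin Hr R B u v.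
Proof.
case=> h1 h2 _ h4 [->|[->|[-> h]]]; try exact: R'_notHr.
by move: h4; rewrite /nonedge h.
Qed.

Lemma symA2 u1 u2 v1 v2 e : confA2 E (Eb' R B u v) u1 u2 v1 v2 ->
  config_edge E u1 u2 v1 v2 e -> e \notin Hr R B u v.
Proof.
case=> h1 h2 h3 h4 [->|[->|[-> h]]]; apply/negP => H.
- exact: caseA2 H h2 h3 h4.
- exact: (caseA2 (u1:=u2) (u2:=u1) (v1:=v2) (v2:=v1)) H h1 h4 h3.
- by move: h4; rewrite /nonedge h.
Qed.

Lemma symB1 u1 u2 v1 v2 e : confB1 E (Er' R B u v) (Eb' R B u v) u1 u2 v1 v2 ->
  config_edge E u1 u2 v1 v2 e -> e \notin Hr R B u v.
Proof.
case=> h1 h2 h3 h4 [->|[->|[-> h]]]; try exact: R'_notHr.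
apply/negP => H; exact: caseB1 H h1 h2 h3.
Qed.

Lemma symB2 u1 u2 v1 v2 e : confB2 E (Er' R B u v) (Eb' R B u v) u1 u2 v1 v2 ->
  config_edge E u1 u2 v1 v2 e -> e \notin Hr R B u v.
Proof.
case=> h1 h2 h3 h4 [->|[->|[-> h]]]; try exact: R'_notHr.
- apply/negP => H; exact: caseB2a H h2 h3 h4.
- apply/negP => H; exact: caseB2b H h1 h3 h4.
Qed.

Variable F : {set U * V}.
Hypotheses (Cf : forall a b c d, (a,b) \in R -> (c,d) \in R -> (a,d) \notin E -> (c,b) \in F -> False)
  (FB : forall e, e \in F -> e \in R -> False).

Lemma caseC1 u1 u2 v1 v2 :
  (u1,v1) \in Hb R B u v -> (u2,v2) \in Er' R B u v -> (u1,v2) \notin E ->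
  (u2,v1) \in F -> False.
Proof.
rewrite /Er' !in_setU !in_setD !inE /= => /and3P[b11 ru1 r1v].
move=> /orP[/andP[nHr22 r22]|/and3P[_ r _]] h12 f21; last first.
  exact: contraE uvE (A1f r1v r h12).
have uv2E : (u,v2) \in E.
  by apply/negPn/negP => h; exact: Cf ru1 r22 h f21.
have buv2 : (u,v2) \in B.
  apply: (comB (c:=u1) (d:=v)) => //; first exact: RE.
  apply/negP => r; exact: contraE uvE (A1f r1v r h12).
have nb2v : (u2,v) \notin B by apply/negP => b; move: nHr22; rewrite r22 buv2 b.
have u2vE : (u2,v) \in E := A1f r1v r22 h12.
have [x [y [bxy h2y hx2]]] := partB r22.
have uyE : (u,y) \in E := A2f bxy buv2 hx2.
have ru2v : (u2,v) \in R by apply: (comR (c:=u) (d:=y)).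
exact: Cf ru1 ru2v uvE f21.
Qed.

Lemma caseC2 u1 u2 v1 v2 :
  (u2,v2) \in Hb R B u v -> (u1,v1) \in Er' R B u v -> (u1,v2) \notin E ->
  (u2,v1) \in F -> False.
Proof.
rewrite /Er' !in_setU !in_setD !inE /= => /and3P[b22 ru2 r2v].
move=> /orP[/andP[nHr11 r11]|/and3P[_ _ r]] h12 f21; last first.
  exact: contraE uvE (A1f r ru2 h12).
have uv1E : (u,v1) \in E := A1f r11 ru2 h12.
have u1vE : (u1,v) \in E.
  by apply/negPn/negP => h; exact: Cf r11 r2v h f21.
have bu1v : (u1,v) \in B.
  apply: (comB (c:=u) (d:=v2)) => //; first exact: RE.
  apply/negP => r; exact: contraE uvE (A1f r ru2 h12).
have nbu1 : (u,v1) \notin B by apply/negP => b; move: nHr11; rewrite r11 b bu1v.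
have [x [y [bxy h1y hx1]]] := partB r11.
have xvE : (x,v) \in E := A2f bu1v bxy h1y.
have ruv1 : (u,v1) \in R by apply: (comR (c:=x) (d:=v)).
exact: Cf ruv1 r2v uvE f21.
Qed.

Lemma symC u1 u2 v1 v2 e : confC E F (Er' R B u v) u1 u2 v1 v2 ->
  config_edge E u1 u2 v1 v2 e -> e \notin Hset R B u v.
Proof.
case=> h1 h2 h3 h4 [->|[->|[-> h]]]; rewrite /Hset in_setU negb_or.
- rewrite R'_notHr //=; apply/negP => H; exact: caseC1 H h2 h3 h4.
- rewrite R'_notHr //=; apply/negP => H; exact: caseC2 H h1 h3 h4.
- apply/andP; split; apply/negP; rewrite !inE /=.
    by move=> /and3P[r _ _]; exact: FB h4 r.
  move=> /and3P[_ r1 r2]; exact: Cf r1 r2 uvE h4.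
Qed.

End Sym.

Theorem lemma2 (U V : finType) (E F Er Eb : {set U * V}) (u : U) (v : V) :
  F \subset E ->
  bipartition E F Er Eb ->
  AC_free E F Er Eb ->
  nonedge E (u, v) ->
  forall (u1 u2 : U) (v1 v2 : V) (e : U * V),
    forbidden_config E F (Er' Er Eb u v) (Eb' Er Eb u v) u1 u2 v1 v2 ->
    config_edge E u1 u2 v1 v2 e ->
    e \notin Hset Er Eb u v.
Proof.
move=> FE [dRB ReqC FsubB] AC uvE u1 u2 v1 v2 e Hconf Hedge.
have inC : forall e, (e \in committed E) = (e \in Er) || (e \in Eb).
  by move=> e'; rewrite -ReqC in_setU.
have RE : forall e, e \in Er -> e \in E.
  move=> e' h; have : e' \in committed E by rewrite inC h.
  by rewrite inE => /andP[].
have BE : forall e, e \in Eb -> e \in E.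
  move=> e' h; have : e' \in committed E by rewrite inC h orbT.
  by rewrite inE => /andP[].
have disj : forall e, e \in Er -> e \in Eb -> False.
  by move=> e' h; rewrite (disjointFr dRB h).
have disj' : forall e, e \in Eb -> e \in Er -> False.
  by move=> e' h1 h2; exact: disj h2 h1.
have comC : forall a b c d, (a,b) \in E -> (c,d) \in E -> (a,d) \notin E -> (c,b) \notin E ->
    (a,b) \in committed E.
  move=> a b c d h1 h2 h3 h4; rewrite inE h1 /=; apply/existsP; exists (c,d).
  rewrite /conflict h1 h2 /= h3 h4 !andbT.
  by apply/eqP => -[ec ed]; move: h3; rewrite ed h1.
have com : forall a b c d, (a,b) \in E -> (c,d) \in E -> (a,d) \notin E -> (c,b) \notin E ->
    ((a,b) \in Er) \/ ((a,b) \in Eb).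
  by move=> a b c d h1 h2 h3 h4; move: (comC _ _ _ _ h1 h2 h3 h4); rewrite inC => /orP.
have com' : forall a b c d, (a,b) \in E -> (c,d) \in E -> (a,d) \notin E -> (c,b) \notin E ->
    ((a,b) \in Eb) \/ ((a,b) \in Er).
  by move=> a b c d h1 h2 h3 h4; case: (com _ _ _ _ h1 h2 h3 h4); auto.
have partC : forall (a : U) (b : V), (a,b) \in committed E -> exists x y,
    [/\ (x,y) \in E, (a,y) \notin E & (x,b) \notin E].
  move=> a b; rewrite inE => /andP[_ /existsP[[x y] /andP[_ c]]].
  by move: c; rewrite /conflict => /and4P[_ hxy h1 h2]; exists x, y; split.
have part : forall (a : U) (b : V), (a,b) \in Er -> exists x y,
    [/\ (x,y) \in E, (a,y) \notin E & (x,b) \notin E].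
  by move=> a b h; apply: partC; rewrite inC h.
have part' : forall (a : U) (b : V), (a,b) \in Eb -> exists x y,
    [/\ (x,y) \in E, (a,y) \notin E & (x,b) \notin E].
  by move=> a b h; apply: partC; rewrite inC h orbT.
have A1f : forall a b c d, (a,b) \in Er -> (c,d) \in Er -> (a,d) \notin E -> (c,b) \in E.
  move=> a b c d h1 h2 h3; apply/negPn/negP => h4.
  by have [n _ _] := AC a c b d; apply: n; split.
have A2f : forall a b c d, (a,b) \in Eb -> (c,d) \in Eb -> (a,d) \notin E -> (c,b) \in E.
  move=> a b c d h1 h2 h3; apply/negPn/negP => h4.
  by have [_ n _] := AC a c b d; apply: n; split.
have Cf : forall a b c d, (a,b) \in Er -> (c,d) \in Er -> (a,d) \notin E -> (c,b) \in F -> False.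
  move=> a b c d h1 h2 h3 h4.
  by have [_ _ n] := AC a c b d; apply: n; split.
have FB : forall e, e \in F -> e \in Er -> False.
  move=> e' hf hr; have : e' \in F :&: committed E by rewrite inE hf inC hr.
  move/(subsetP FsubB) => hb; exact: disj hr hb.
case: Hconf => [K|[K|[K|[K|K]]]]; last exact: (symC RE disj com part A1f A2f uvE Cf FB K Hedge).
all: rewrite /Hset in_setU negb_or; apply/andP; split.
- exact: (symA1 disj K Hedge).
- exact: (@symA2 _ _ E Eb Er u v RE com' A2f A1f uvE _ _ _ _ _ K Hedge).
- exact: (@symA2 _ _ E Er Eb u v BE com A1f A2f uvE _ _ _ _ _ K Hedge).
- exact: (@symA1 _ _ E Eb Er u v disj' _ _ _ _ _ K Hedge).
- exact: (symB1 RE BE disj com part A1f A2f uvE K Hedge).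
- exact: (@symB2 _ _ E Eb Er u v BE RE disj' com' part' A2f A1f uvE _ _ _ _ _ K Hedge).
- exact: (symB2 RE BE disj com part A1f A2f uvE K Hedge).
- exact: (@symB1 _ _ E Eb Er u v BE RE disj' com' part' A2f A1f uvE _ _ _ _ _ K Hedge).
Qed.
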